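(* Let $E$ be a finite non-abelian $p$-group of class $2$ with cyclic centre, and let $E_n,Z_n,F_n,K_n,L_n,J_n,\alpha_n$ ($n\ge0$) and the homomorphisms $\psi_n:J_n/L_n\to J_{n-1}/L_{n-1}$ ($n\ge1$) be as follows: $E_n=E^{p^n}$, $Z_n=Z(E_n)$, $F_n=\{(x^{(i)})\in Z_n:\prod_{i=1}^{p^n}x^{(i)}=1\}$, $K_n=E_n/F_n$, $L_n=Z_n/F_n$, $J_n=K_n\rtimes\langle\alpha_n\rangle$ with $\alpha_n$ of order $p^n$ cyclically shifting coordinates; $\psi_n$ is induced on $K_n/L_n\cong E_n/Z_n$ by $x\mapsto\big(\prod_{r\equiv i\ (\mathrm{mod}\ p^{n-1})}x^{(r)}\big)_{i}$ (increasing order) and sends $\alpha_n\mapsto\alpha_{n-1}$. Let $$K=\{(k_n)\in\textstyle\prod_{n\ge0}K_n:\psi_n(k_nL_n)=k_{n-1}L_{n-1}\ \forall n\ge1\},\quad L=\prod_{n\ge0}L_n,$$ let $\mathcal U$ be a non-principal ultrafilter on the index set, $D=\{(k_n)\in L:\{n:k_n\ne1\}\notin\mathcal U\}$, $H=K/D$ and $Z=L/D$. Then $Z\cong Z(E)$, and $H$ is monolithic with $Z(H)=Z$.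
   Context: A group is monolithic if the intersection of all its nontrivial normal subgroups is nontrivial. A non-principal ultrafilter is a maximal filter (family of nonempty subsets closed under finite intersections and supersets) not consisting of all supersets of a fixed set. *)

(* Defs.v *)
From HB Require Import structures.
From mathcomp Require Import all_boot all_algebra all_fingroup all_solvable.
From mathcomp Require Import pgroup center nilpotent cyclic.

Set Implicit Arguments.
Unset Strict Implicit.
Unset Printing Implicit Defensive.

(* Prop-valued subsets and a minimal vocabulary for (possibly infinite)  *)
(* groups given as a subset G of a carrier type with mul / inv / unit.  *)

Definition pset (T : Type) := T -> Prop.

(* setwise product and inverse (used for quotient groups = cosets) *)
Definition smul (T : Type) (mul : T -> T -> T) (A B : pset T) : pset T :=
  fun z => exists a b, A a /\ B b /\ z = mul a b.
Definition sinv (T : Type) (inv : T -> T) (A : pset T) : pset T :=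
  fun z => exists a, A a /\ z = inv a.

Section AbstractGroup.
Variables (T : Type) (G : pset T) (mul : T -> T -> T) (inv : T -> T) (e : T).

Definition is_subgroup (N : pset T) : Prop :=
  [/\ forall x, N x -> G x, N e,
      forall x y, N x -> N y -> N (mul x y) &
      forall x, N x -> N (inv x)].

Definition is_normal_subgroup (N : pset T) : Prop :=
  is_subgroup N /\ forall g x, G g -> N x -> N (mul (mul (inv g) x) g).

Definition nontrivial_sub (N : pset T) : Prop := exists x, N x /\ x <> e.

(* the intersection of all nontrivial normal subgroups is nontrivial *)
Definition monolithic : Prop :=
  exists h, [/\ G h, h <> e &
    forall N, is_normal_subgroup N -> nontrivial_sub N -> N h].

Definition gcenter : pset T :=
  fun z => G z /\ forall g, G g -> mul z g = mul g z.

End AbstractGroup.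

Definition isomorphic_to_fin (T : Type) (A : pset T) (mul : T -> T -> T)
    (gT : finGroupType) (B : {set gT}) : Prop :=
  exists f : T -> gT,
    [/\ forall x, A x -> f x \in B,
        forall x y, A x -> A y -> f x = f y -> x = y,
        forall b, b \in B -> exists x, A x /\ f x = b &
        forall x y, A x -> A y -> f (mul x y) = (f x * f y)%g].

Definition is_filter (F : pset (pset nat)) : Prop :=
  [/\ forall A, F A -> exists n, A n,
      forall A B, F A -> F B -> F (fun n => A n /\ B n) &
      forall A B, F A -> (forall n, A n -> B n) -> F B].

Definition is_ultrafilter (U : pset (pset nat)) : Prop :=
  is_filter U /\ forall V, is_filter V -> (forall A, U A -> V A) -> V = U.

Definition nonprincipal (U : pset (pset nat)) : Prop :=
  ~ exists A0 : pset nat, U = (fun B => forall n, A0 n -> B n).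

(* E_n = E^(p^n) : tuples indexed by 'I_(p^n) (coordinates 0..p^n-1).  *)

Section Construction.
Variables (gT : finGroupType) (E : {set gT}) (p : nat).

Definition tup (n : nat) := {ffun 'I_(p ^ n) -> gT}.

Definition tmul n (s t : tup n) : tup n := [ffun i => (s i * t i)%g].
Definition tinv n (s : tup n) : tup n := [ffun i => (s i)^-1%g].
Definition tone n : tup n := [ffun => 1%g].

Definition inE_n n (t : tup n) : Prop := forall i, t i \in E.
Definition inZ_n n (t : tup n) : Prop :=
  inE_n t /\ forall u, inE_n u -> tmul t u = tmul u t.
Definition inF_n n (t : tup n) : Prop :=
  inZ_n t /\ (\prod_(i < p ^ n) t i)%g = 1%g.

Definition cosF n (t : tup n) : pset (tup n) :=
  fun u => exists f, inF_n f /\ u = tmul t f.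
Definition inK_n n (k : pset (tup n)) : Prop :=
  exists t, inE_n t /\ k = cosF t.
Definition inL_n n (k : pset (tup n)) : Prop :=
  exists t, inZ_n t /\ k = cosF t.

Definition psi_rep n (t : tup n.+1) : tup n :=
  [ffun i : 'I_(p ^ n) => (\prod_(r < p ^ n.+1 | r %% p ^ n == i) t r)%g].

Definition seqT := forall n : nat, pset (tup n).

Definition xmul (x y : seqT) : seqT := fun n => smul (@tmul n) (x n) (y n).
Definition xinv (x : seqT) : seqT := fun n => sinv (@tinv n) (x n).
Definition xone : seqT := fun n => cosF (tone n).

(* psi_{n+1}(k_{n+1} L_{n+1}) = k_n L_n, computed through
   K_n/L_n ~= E_n/Z_n on representatives *)
Definition compatible (x : seqT) : Prop :=
  forall n (t : tup n.+1) (s : tup n), x n.+1 t -> x n s ->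
    inZ_n (tmul (tinv s) (psi_rep t)).

Definition inK (x : seqT) : Prop := (forall n, inK_n (x n)) /\ compatible x.
Definition inL (x : seqT) : Prop := forall n, inL_n (x n).

Variable U : pset (pset nat).

Definition inD (x : seqT) : Prop :=
  inL x /\ ~ U (fun n => x n <> cosF (tone n)).

Definition cosD (x : seqT) : pset seqT :=
  fun y => exists d, inD d /\ y = xmul x d.

Definition Hcar : pset (pset seqT) := fun C => exists x, inK x /\ C = cosD x.
Definition Hmul : pset seqT -> pset seqT -> pset seqT := smul xmul.
Definition Hinv : pset seqT -> pset seqT := sinv xinv.
Definition Hone : pset seqT := cosD xone.

Definition Zcar : pset (pset seqT) := fun C => exists x, inL x /\ C = cosD x.

End Construction.

(* Main.v *)
Require Import Defs.
From mathcomp Require Import all_boot all_algebra all_fingroup all_solvable.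
From mathcomp Require Import pgroup center nilpotent cyclic.
From Stdlib Require Import Classical ClassicalEpsilon FunctionalExtensionality PropExtensionality.

Module Aux.
Set Implicit Arguments.
Unset Strict Implicit.
Unset Printing Implicit Defensive.


Lemma pset_ext (T : Type) (A B : pset T) : (forall x, A x <-> B x) -> A = B.
Proof.
move=> H; apply: functional_extensionality => x.
by apply: propositional_extensionality.
Qed.

Section UF.
Variable U : pset (pset nat).
Hypothesis hU : is_ultrafilter U.

Lemma uf_ne A : U A -> exists n, A n.
Proof. by case: hU => -[h _ _] _; apply: h. Qed.

Lemma uf_cap A B : U A -> U B -> U (fun n => A n /\ B n).
Proof. by case: hU => -[_ h _] _; apply: h. Qed.

Lemma uf_up A B : U A -> (forall n, A n -> B n) -> U B.
Proof. by case: hU => -[_ _ h] _; apply: h. Qed.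

Lemma uf_max V : is_filter V -> (forall A, U A -> V A) -> V = U.
Proof. by case: hU => _ h; apply: h. Qed.

Lemma uf_T : U (fun _ => True).
Proof.
apply: NNPP => hn.
have hP : is_filter (fun B : pset nat => B 0).
  split; first by move=> A h; exists 0.
  - by move=> A B; split.
  - by move=> A B h1 h2; apply: h2.
have e : (fun B : pset nat => B 0) = U.
  by apply: uf_max hP _ => A hA; exfalso; apply: hn; apply: uf_up hA _.
by apply: hn; rewrite -e.
Qed.

Lemma uf_compl A : U A \/ U (fun n => ~ A n).
Proof.
case: (classic (exists C, U C /\ forall n, C n -> A n)) => [[C [hC hCA]]|hno].
  by left; apply: uf_up hC hCA.
right.
pose V := fun B : pset nat => exists C, U C /\ forall n, C n /\ ~ A n -> B n.
have hV : is_filter V.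
  split.
  - move=> B [C [hC hCB]]; apply: NNPP => hne; apply: hno; exists C; split=> // n Cn.
    apply: NNPP => nA; apply: hne; exists n; exact: hCB.
  - move=> B1 B2 [C1 [h1 e1]] [C2 [h2 e2]]; exists (fun n => C1 n /\ C2 n).
    split; first exact: uf_cap.
    by move=> n [[c1 c2] nA]; split; [apply: e1 | apply: e2].
  - move=> B1 B2 [C [h e]] hB; exists C; split=> // n hn; apply: hB; exact: e.
have hUV : forall B, U B -> V B by move=> B hB; exists B; split=> // n [].
have <- := uf_max hV hUV.
exists (fun _ => True); split; [exact: uf_T | by move=> n []].
Qed.

Lemma uf_not A : U A -> ~ U (fun n => ~ A n).
Proof.
move=> h1 h2; have [n [a na]] := uf_ne (uf_cap h1 h2); exact: na.
Qed.

Lemma uf_union A B : U (fun n => A n \/ B n) -> U A \/ U B.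
Proof.
move=> h; case: (uf_compl A) => hA; first by left.
case: (uf_compl B) => hB; first by right.
have [n [[a|b] [na nb]]] := uf_ne (uf_cap h (uf_cap hA hB)); by [].
Qed.

Lemma uf_finite (T : finType) (g : nat -> T) : exists v, U (fun n => g n = v).
Proof.
apply: NNPP => hno.
have hall : forall v, U (fun n => g n <> v).
  move=> v; case: (uf_compl (fun n => g n = v)) => // h; exfalso; apply: hno; by exists v.
have key : forall s : seq T, U (fun n => forall v, v \in s -> g n <> v).
  elim=> [|v s IH]; first by apply: uf_up uf_T _ => n _ v.
  apply: uf_up (uf_cap (hall v) IH) _ => n [h1 h2] w; rewrite inE => /orP[/eqP->|]//.
  exact: h2.
have [n hn] := uf_ne (key (enum T)).
by apply: (hn (g n)) => //; rewrite mem_enum.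
Qed.

Hypothesis hnp : nonprincipal U.

Lemma uf_single n : ~ U (fun m => m = n).
Proof.
move=> h; apply: hnp; exists (fun m => m = n).
have hP : is_filter (fun B : pset nat => forall m, m = n -> B m).
  split.
  - by move=> A hA; exists n; apply: hA.
  - by move=> A B h1 h2 m e; split; [apply: h1|apply: h2].
  - by move=> A B h1 h2 m e; apply: h2; apply: h1.
symmetry; apply: uf_max hP _ => B hB m ->.
by have [k [hk e]] := uf_ne (uf_cap hB h); rewrite -e.
Qed.

Lemma uf_cofinite n0 : U (fun n => n0 <= n).
Proof.
case: (uf_compl (fun n => n0 <= n)) => // h; exfalso.
have : U (fun n => n < n0) by apply: uf_up h _ => n; rewrite leqNgt => /negP/negbNE.
elim: n0 {h} => [|k IH] h.
  by have [n hn] := uf_ne h.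
have : U (fun n => n < k \/ n = k).
  apply: uf_up h _ => n; rewrite ltnS leq_eqVlt => /orP[/eqP->|]; by [right|left].
by case/uf_union => [/IH|/uf_single].
Qed.

End UF.

Definition qcos (T : Type) (N : pset T) (mul : T -> T -> T) (x : T) : pset T :=
  fun y => exists f, N f /\ y = mul x f.

Record qhyp (T : Type) (G N : pset T) (mul : T -> T -> T) (inv : T -> T) (e : T) : Prop := QH {
  qGmul : forall x y, G x -> G y -> G (mul x y);
  qGinv : forall x, G x -> G (inv x);
  qGe : G e;
  qmulA : forall x y z, G x -> G y -> G z -> mul x (mul y z) = mul (mul x y) z;
  qmul1x : forall x, G x -> mul e x = x;
  qmulx1 : forall x, G x -> mul x e = x;
  qmulV : forall x, G x -> mul x (inv x) = e;
  qmulVx : forall x, G x -> mul (inv x) x = e;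
  qNG : forall x, N x -> G x;
  qNe : N e;
  qNmul : forall x y, N x -> N y -> N (mul x y);
  qNinv : forall x, N x -> N (inv x);
  qNcent : forall f x, N f -> G x -> mul f x = mul x f }.

Section Quot.
Variables (T : Type) (G N : pset T) (mul : T -> T -> T) (inv : T -> T) (e : T).
Variable hq : qhyp G N mul inv e.
Let Gmul := qGmul hq.
Let Ginv := qGinv hq.
Let Ge := qGe hq.
Let mulA := qmulA hq.
Let mul1x := qmul1x hq.
Let mulx1 := qmulx1 hq.
Let mulV := qmulV hq.
Let mulVx := qmulVx hq.
Let NG := qNG hq.
Let Ne := qNe hq.
Let Nmul := qNmul hq.
Let Ninv := qNinv hq.
Let Ncent := qNcent hq.


Ltac gs := repeat match goal with
  | |- G (mul _ _) => apply: Gmul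
  | |- G (inv _) => apply: Ginv
  | |- G e => exact: Ge
  | H : N ?x |- G ?x => exact: NG H
  | |- G _ => assumption
  end.

Lemma inv_uniq a b : G a -> G b -> mul a b = e -> inv a = b.
Proof.
move=> ga gb h.
have e1 : inv a = mul (inv a) (mul a b) by rewrite h mulx1; gs.
by rewrite e1 mulA ?mulVx ?mul1x; gs.
Qed.

Lemma invK x : G x -> inv (inv x) = x.
Proof. by move=> gx; apply: inv_uniq; rewrite ?mulVx; gs. Qed.

Lemma inv_mul x y : G x -> G y -> inv (mul x y) = mul (inv y) (inv x).
Proof.
move=> gx gy; apply: inv_uniq; gs.
by rewrite -mulA; gs; rewrite [mul y _]mulA; gs; rewrite mulV; gs; rewrite mul1x; gs; rewrite mulV; gs.
Qed.

Lemma qcos_mem x : G x -> qcos N mul x x.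
Proof. by move=> gx; exists e; split=> //; rewrite mulx1. Qed.

Lemma qcos_G x y : G x -> qcos N mul x y -> G y.
Proof. by move=> gx [f [nf ->]]; gs. Qed.

Lemma qcos_eq x y : G x -> G y -> (qcos N mul x = qcos N mul y <-> N (mul (inv x) y)).
Proof.
move=> gx gy; split=> [ex|nxy].
  have : qcos N mul x y by rewrite ex; apply: qcos_mem.
  by case=> f [nf ->]; rewrite mulA ?mulVx ?mul1x; gs.
have ey : y = mul x (mul (inv x) y) by rewrite mulA ?mulV ?mul1x; gs.
apply: pset_ext => z; split=> -[f [nf ->]].
  exists (mul (inv (mul (inv x) y)) f); split; first by apply: Nmul => //; apply: Ninv.
  rewrite mulA; gs; congr (mul _ _).
  by rewrite inv_mul ?invK ?mulA ?mulV ?mul1x; gs.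
exists (mul (mul (inv x) y) f); split; first by apply: Nmul.
by rewrite mulA -?ey; gs.
Qed.

Lemma qcos_eq1 x : G x -> (qcos N mul x = qcos N mul e <-> N x).
Proof.
move=> gx; rewrite qcos_eq ?mulx1; gs; split=> [/Ninv|]; last exact: Ninv.
by rewrite invK.
Qed.

Lemma qcosM x y : G x -> G y -> smul mul (qcos N mul x) (qcos N mul y) = qcos N mul (mul x y).
Proof.
move=> gx gy; apply: pset_ext => z; split.
  case=> a [b [[f [nf ->]] [[g [ng ->]] ->]]].
  exists (mul f g); split; first exact: Nmul.
  have gf := NG nf; have gg := NG ng.
  have -> : mul (mul x f) (mul y g) = mul x (mul f (mul y g)) by symmetry; apply: mulA; gs.
  have -> : mul (mul x y) (mul f g) = mul x (mul y (mul f g)) by symmetry; apply: mulA; gs.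
  congr (mul x _).
  have -> : mul f (mul y g) = mul (mul f y) g by apply: mulA; gs.
  by rewrite (Ncent nf gy); symmetry; apply: mulA; gs.
case=> f [nf ->]; exists x, (mul y f); split; first exact: qcos_mem.
split; first by exists f.
by rewrite mulA; gs.
Qed.

Lemma qcosV x : G x -> sinv inv (qcos N mul x) = qcos N mul (inv x).
Proof.
move=> gx; apply: pset_ext => z; split.
  case=> a [[f [nf ->]] ->]; exists (inv f); split; first exact: Ninv.
  by rewrite inv_mul ?(Ncent (Ninv nf)); gs.
case=> f [nf ->]; exists (mul x (inv f)); split.
  by exists (inv f); split=> //; apply: Ninv.
by rewrite inv_mul ?invK ?(Ncent nf (Ginv gx)); gs.
Qed.


End Quot.

Import GroupScope.

Lemma prodM_ab (gT : finGroupType) (A : {group gT}) (I : Type) (r : seq I) (P : pred I)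
  (F1 F2 : I -> gT) : abelian A -> (forall i, P i -> F1 i \in A) -> (forall i, P i -> F2 i \in A) ->
  \prod_(i <- r | P i) (F1 i * F2 i) = (\prod_(i <- r | P i) F1 i) * \prod_(i <- r | P i) F2 i.
Proof.
move=> abA h1 h2; elim: r => [|i r IH]; first by rewrite !big_nil mulg1.
rewrite !big_cons; case: ifP => Pi //; rewrite IH.
have c : commute (F2 i) (\prod_(j <- r | P j) F1 j).
  by apply: (centsP abA); [apply: h2 | apply: group_prod].
by rewrite -!mulgA; congr (_ * _); rewrite mulgA c -mulgA.
Qed.

Section Tup.
Variables (gT : finGroupType) (E : {group gT}) (p : nat).
Local Notation tup := (tup gT p).
Local Notation one n := (@tone gT p n).

Lemma tmulA n (a b c : tup n) : tmul a (tmul b c) = tmul (tmul a b) c.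
Proof. by apply/ffunP => i; rewrite !ffunE mulgA. Qed.
Lemma tmul1x n (a : tup n) : tmul (one n) a = a.
Proof. by apply/ffunP => i; rewrite !ffunE mul1g. Qed.
Lemma tmulx1 n (a : tup n) : tmul a (one n) = a.
Proof. by apply/ffunP => i; rewrite !ffunE mulg1. Qed.
Lemma tmulV n (a : tup n) : tmul a (tinv a) = one n.
Proof. by apply/ffunP => i; rewrite !ffunE mulgV. Qed.
Lemma tmulVx n (a : tup n) : tmul (tinv a) a = one n.
Proof. by apply/ffunP => i; rewrite !ffunE mulVg. Qed.

Lemma inE_mul n (a b : tup n) : inE_n E a -> inE_n E b -> inE_n E (tmul a b).
Proof. by move=> ha hb i; rewrite ffunE groupM. Qed.
Lemma inE_inv n (a : tup n) : inE_n E a -> inE_n E (tinv a).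
Proof. by move=> ha i; rewrite ffunE groupV. Qed.
Lemma inE_one n : inE_n E (one n).
Proof. by move=> i; rewrite ffunE group1. Qed.

Lemma inZ_nP n (t : tup n) : inZ_n E t <-> forall i, t i \in 'Z(E).
Proof.
split.
- move=> [hE hc] i; apply/centerP; split; first exact: hE.
  move=> y yE.
  pose u : tup n := [ffun j => if j == i then y else 1].
  have uE : inE_n E u by move=> j; rewrite ffunE; case: eqP => _ //; exact: group1.
  have := congr1 (fun w : tup n => w i) (hc u uE); rewrite !ffunE eqxx; by [].
- move=> h; split; first by move=> i; apply: (subsetP (center_sub E)); exact: h.
  move=> u uE; apply/ffunP=> i; rewrite !ffunE; have /centerP [_ c] := h i; exact: c.
Qed.

Lemma inZ_E n (t : tup n) : inZ_n E t -> inE_n E t.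
Proof. by case. Qed.

Lemma inF_nP n (t : tup n) : inF_n E t <-> (forall i, t i \in 'Z(E)) /\ \prod_(i < p ^ n) t i = 1.
Proof. by rewrite /inF_n inZ_nP. Qed.

Lemma prod_tmul n (a b : tup n) : (forall i, a i \in 'Z(E)) -> (forall i, b i \in 'Z(E)) ->
  \prod_(i < p ^ n) (tmul a b) i = (\prod_(i < p ^ n) a i) * \prod_(i < p ^ n) b i.
Proof.
move=> ha hb; rewrite -(prodM_ab (A := 'Z(E))) ?center_abelian //.
by apply: eq_bigr => i _; rewrite ffunE.
Qed.

Lemma prod_tinv n (a : tup n) : (forall i, a i \in 'Z(E)) ->
  \prod_(i < p ^ n) (tinv a) i = (\prod_(i < p ^ n) a i)^-1.
Proof.
move=> ha.
have h : (\prod_(i < p ^ n) (tinv a) i) * \prod_(i < p ^ n) a i = 1.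
  rewrite -prod_tmul //; last by move=> i; rewrite ffunE groupV.
  by rewrite tmulVx big1 // => i _; rewrite ffunE.
by rewrite -(mulgK (\prod_(i < p ^ n) a i) (\prod_(i < p ^ n) (tinv a) i)) h mul1g.
Qed.

Lemma inZ_mul n (a b : tup n) : inZ_n E a -> inZ_n E b -> inZ_n E (tmul a b).
Proof. by rewrite !inZ_nP => ha hb i; rewrite ffunE groupM. Qed.
Lemma inZ_inv n (a : tup n) : inZ_n E a -> inZ_n E (tinv a).
Proof. by rewrite !inZ_nP => ha i; rewrite ffunE groupV. Qed.
Lemma inZ_one n : inZ_n E (one n).
Proof. by apply/inZ_nP => i; rewrite ffunE group1. Qed.

Lemma qh1 n : qhyp (@inE_n gT E p n) (@inF_n gT E p n) (@tmul gT p n) (@tinv gT p n) (one n).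
Proof.
split.
- exact: inE_mul.
- exact: inE_inv.
- exact: inE_one.
- by move=> *; apply: tmulA.
- by move=> *; apply: tmul1x.
- by move=> *; apply: tmulx1.
- by move=> *; apply: tmulV.
- by move=> *; apply: tmulVx.
- by move=> x [[]].
- split; first exact: inZ_one.
  by rewrite big1 // => i _; rewrite ffunE.
- move=> x y /inF_nP [hx px] /inF_nP [hy py]; apply/inF_nP; split.
    by move=> i; rewrite ffunE groupM.
  by rewrite prod_tmul // px py mulg1.
- move=> x /inF_nP [hx px]; apply/inF_nP; split.
    by move=> i; rewrite ffunE groupV.
  by rewrite prod_tinv // px invg1.
- by move=> f x [[_ h] _] hx; apply: h.
Qed.

Lemma cosFM n (t u : tup n) : inE_n E t -> inE_n E u ->
  smul (@tmul gT p n) (cosF E t) (cosF E u) = cosF E (tmul t u).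
Proof. exact: (qcosM (qh1 n)). Qed.

Lemma cosFV n (t : tup n) : inE_n E t -> sinv (@tinv gT p n) (cosF E t) = cosF E (tinv t).
Proof. exact: (qcosV (qh1 n)). Qed.

Lemma cosF_eq1 n (t : tup n) : inE_n E t -> (cosF E t = cosF E (one n) <-> inF_n E t).
Proof. exact: (qcos_eq1 (qh1 n)). Qed.

Lemma cosF_mem n (t : tup n) : inE_n E t -> cosF E t t.
Proof. exact: (qcos_mem (qh1 n)). Qed.

End Tup.

Import GroupScope.

Lemma prodV_ab (gT : finGroupType) (A : {group gT}) (I : Type) (r : seq I) (P : pred I)
  (F : I -> gT) : abelian A -> (forall i, P i -> F i \in A) ->
  \prod_(i <- r | P i) (F i)^-1 = (\prod_(i <- r | P i) F i)^-1.
Proof.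
move=> abA h.
have e : (\prod_(i <- r | P i) (F i)^-1) * \prod_(i <- r | P i) F i = 1.
  rewrite -(prodM_ab (A := A)) //; last by move=> i Pi; rewrite groupV h.
  by rewrite big1 // => i _; rewrite mulVg.
by rewrite -(mulgK (\prod_(i <- r | P i) F i) (\prod_(i <- r | P i) (F i)^-1)) e mul1g.
Qed.

Section Psi.
Variables (gT : finGroupType) (E : {group gT}) (p : nat).
Hypothesis cl2 : nil_class E <= 2.
Local Notation cZ := (coset 'Z(E)).
Local Notation tup := (tup gT p).
Local Notation one n := (@tone gT p n).

Lemma EnZ x : x \in E -> x \in 'N('Z(E)).
Proof. by move=> h; apply: (subsetP (normal_norm (center_normal E))). Qed.

Lemma abEZ : abelian (E / 'Z(E)).
Proof. by apply: sub_der1_abelian; rewrite -nil_class2. Qed.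

Lemma eqZ_coset a b : a \in E -> b \in E -> (a^-1 * b \in 'Z(E)) <-> cZ a = cZ b.
Proof.
move=> ha hb; split=> h.
  apply/eqP; rewrite eq_mulVg1 -morphV ?EnZ // -morphM ?groupV ?EnZ //.
  by apply/eqP; apply: coset_id.
apply: coset_idr; first by rewrite EnZ // groupM ?groupV.
by rewrite morphM ?groupV ?EnZ // morphV ?EnZ //; rewrite -[coset_morphism _ a]/(cZ a) -[coset_morphism _ b]/(cZ b) h mulVg.
Qed.

Lemma cZM a b : a \in E -> b \in E -> cZ (a * b) = cZ a * cZ b.
Proof. by move=> ha hb; apply: morphM; apply: EnZ. Qed.
Lemma cZV a : a \in E -> cZ a^-1 = (cZ a)^-1.
Proof. by move=> ha; apply: morphV; apply: EnZ. Qed.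

Definition eqZ n (s t : tup n) := forall i, cZ (s i) = cZ (t i).

Lemma inZ_eqZ n (s t : tup n) : inE_n E s -> inE_n E t ->
  (inZ_n E (tmul (tinv s) t) <-> eqZ s t).
Proof.
move=> hs ht; rewrite inZ_nP; split=> h i.
  by apply/eqZ_coset => //; have := h i; rewrite !ffunE.
by rewrite !ffunE; apply/eqZ_coset => //.
Qed.

Lemma psi_E n (t : tup n.+1) : inE_n E t -> inE_n E (psi_rep t).
Proof. by move=> h i; rewrite ffunE; apply: group_prod. Qed.

Lemma psi_Z n (t : tup n.+1) : inZ_n E t -> inZ_n E (psi_rep t).
Proof. by rewrite !inZ_nP => h i; rewrite ffunE; apply: group_prod. Qed.

Lemma cZ_psi n (t : tup n.+1) i : inE_n E t ->
  cZ (psi_rep t i) = \prod_(r < p ^ n.+1 | r %% p ^ n == i) cZ (t r).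
Proof. by move=> h; rewrite ffunE morph_prod // => r _; apply: EnZ. Qed.

Lemma psiM_eqZ n (t u : tup n.+1) i : inE_n E t -> inE_n E u ->
  cZ (psi_rep (tmul t u) i) = cZ (psi_rep t i) * cZ (psi_rep u i).
Proof.
move=> ht hu; rewrite cZ_psi; last exact: inE_mul.
rewrite !cZ_psi //.
rewrite -(@prodM_ab _ (E / 'Z(E))%G _ _ _ (fun r => coset 'Z(E) (t r)) (fun r => coset 'Z(E) (u r))).
- by apply: eq_bigr => r _; rewrite ffunE morphM ?EnZ.
- exact: abEZ.
- by move=> r _; apply: mem_quotient.
- by move=> r _; apply: mem_quotient.
Qed.

Lemma psiV_eqZ n (t : tup n.+1) i : inE_n E t ->
  cZ (psi_rep (tinv t) i) = (cZ (psi_rep t i))^-1.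
Proof.
move=> ht; rewrite cZ_psi; last exact: inE_inv.
rewrite !cZ_psi //.
rewrite -(@prodV_ab _ (E / 'Z(E))%G _ _ _ (fun r => coset 'Z(E) (t r))) ?abEZ //.
- by apply: eq_bigr => r _; rewrite ffunE morphV ?EnZ.
- by move=> r _; apply: mem_quotient.
Qed.

Definition cs (r : forall n, tup n) : seqT gT p := fun n => cosF E (r n).
Definition Erep (r : forall n, tup n) := forall n, inE_n E (r n).
Definition Zrep (r : forall n, tup n) := forall n, inZ_n E (r n).
Definition compat_r (r : forall n, tup n) := forall n, eqZ (r n) (psi_rep (r n.+1)).
Definition rmul (r s : forall n, tup n) : forall n, tup n := fun n => tmul (r n) (s n).
Definition rinv (r : forall n, tup n) : forall n, tup n := fun n => tinv (r n).
Definition rone : forall n, tup n := fun n => one n.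

Lemma Erep_mul r s : Erep r -> Erep s -> Erep (rmul r s).
Proof. by move=> hr hs n; apply: inE_mul. Qed.
Lemma Erep_inv r : Erep r -> Erep (rinv r).
Proof. by move=> hr n; apply: inE_inv. Qed.
Lemma Zrep_mul r s : Zrep r -> Zrep s -> Zrep (rmul r s).
Proof. by move=> hr hs n; apply: inZ_mul. Qed.
Lemma Zrep_inv r : Zrep r -> Zrep (rinv r).
Proof. by move=> hr n; apply: inZ_inv. Qed.
Lemma Zrep_E r : Zrep r -> Erep r.
Proof. by move=> hr n; apply: inZ_E. Qed.

Lemma cs_mul r s : Erep r -> Erep s -> xmul (cs r) (cs s) = cs (rmul r s).
Proof. by move=> hr hs; apply: functional_extensionality_dep => n; apply: cosFM. Qed.

Lemma cs_inv r : Erep r -> xinv (cs r) = cs (rinv r).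
Proof. by move=> hr; apply: functional_extensionality_dep => n; apply: cosFV. Qed.

Lemma cs_one : @xone gT E p = cs rone.
Proof. by []. Qed.

Lemma inK_cs r : Erep r -> compat_r r -> inK E (cs r).
Proof.
move=> hr hc; split; first by move=> n; exists (r n).
move=> n t s [f [hf ->]] [f' [hf' ->]].
have Ef := inZ_E hf.1; have Ef' := inZ_E hf'.1.
apply/inZ_eqZ; [exact: inE_mul | apply: psi_E; exact: inE_mul |].
move=> i; rewrite psiM_eqZ // ffunE coset_kerr; last by move/inZ_nP: hf'.1; apply.
rewrite (coset_id (x := psi_rep f i)); last by have /inZ_nP := psi_Z hf.1; apply.
by rewrite mulg1; apply: hc.
Qed.

Lemma compat_Z r : Zrep r -> compat_r r.
Proof.
move=> hr n i; rewrite coset_id; last by move/inZ_nP: (hr n); apply.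
by rewrite coset_id //; have /inZ_nP := psi_Z (hr n.+1); apply.
Qed.

Lemma inK_rep (x : seqT gT p) : inK E x -> exists r, [/\ Erep r, compat_r r & x = cs r].
Proof.
case=> hK hc.
pose r n := proj1_sig (constructive_indefinite_description _ (hK n)).
have hr n : inE_n E (r n) /\ x n = cosF E (r n) := proj2_sig (constructive_indefinite_description _ (hK n)).
have Er : Erep r by move=> n; case: (hr n).
have xe : x = cs r by apply: functional_extensionality_dep => n; case: (hr n).
exists r; split=> // n; apply/inZ_eqZ => //; first exact: psi_E.
by apply: (hc n (r n.+1) (r n)); rewrite xe /cs; apply: cosF_mem.
Qed.

Lemma inL_rep (x : seqT gT p) : inL E x -> exists z, Zrep z /\ x = cs z.
Proof.
move=> hK.
pose r n := proj1_sig (constructive_indefinite_description _ (hK n)).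
have hr n : inZ_n E (r n) /\ x n = cosF E (r n) := proj2_sig (constructive_indefinite_description _ (hK n)).
exists r; split; first by move=> n; case: (hr n).
by apply: functional_extensionality_dep => n; case: (hr n).
Qed.

Lemma inL_cs z : Zrep z -> inL E (cs z).
Proof. by move=> hz n; exists (z n). Qed.

Lemma inL_K (x : seqT gT p) : inL E x -> inK E x.
Proof.
by move/inL_rep=> [z [hz ->]]; apply: inK_cs; [apply: Zrep_E | apply: compat_Z].
Qed.

Lemma compat_mul r s : Erep r -> Erep s -> compat_r r -> compat_r s -> compat_r (rmul r s).
Proof.
move=> hr hs cr cs n i; rewrite /rmul psiM_eqZ // ffunE cZM ?hr ?hs //.
by rewrite cr cs.
Qed.

Lemma compat_inv r : Erep r -> compat_r r -> compat_r (rinv r).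
Proof.
move=> hr cr n i; rewrite /rinv psiV_eqZ // ffunE cZV ?hr //.
by rewrite cr.
Qed.

End Psi.
Arguments cs [gT] E [p] r n _.

Import GroupScope.

Section L2.
Variables (gT : finGroupType) (E : {group gT}) (p : nat) (U : pset (pset nat)).
Hypothesis cl2 : nil_class E <= 2.
Hypothesis hU : is_ultrafilter U.
Local Notation tup := (tup gT p).
Local Notation one n := (@tone gT p n).
Local Notation sT := (seqT gT p).

Lemma Erep_one : Erep E (@rone gT p).
Proof. by move=> n; apply: inE_one. Qed.
Lemma Zrep_one : Zrep E (@rone gT p).
Proof. by move=> n; apply: inZ_one. Qed.

Lemma inD_cs (z : forall n, tup n) : Zrep E z -> (inD E U (cs E z) <-> ~ U (fun n => ~ inF_n E (z n))).
Proof.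
move=> hz.
have e : (fun n : nat => cs E z n <> cosF E (one n)) = (fun n : nat => ~ inF_n E (z n)).
  apply: (@pset_ext nat) => n; have := cosF_eq1 (inZ_E (hz n)); rewrite /cs; tauto.
rewrite /inD e; split=> [[]//|h]; split=> //; exact: inL_cs.
Qed.

Lemma inD_rep (x : sT) : inD E U x ->
  exists z, [/\ Zrep E z, x = cs E z & ~ U (fun n => ~ inF_n E (z n))].
Proof.
move=> hx; have [z [hz xe]] := inL_rep hx.1.
by exists z; split=> //; apply/inD_cs => //; rewrite -xe.
Qed.

Lemma csE (r s : forall n, tup n) : (forall n, r n = s n) -> cs E r = cs E s.
Proof. by move=> h; congr (cs E _); apply: functional_extensionality_dep. Qed.

Lemma qh2 : qhyp (@inK gT E p) (@inD gT E p U) (@xmul gT p) (@xinv gT p) (@xone gT E p).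
Proof.
split.
- move=> x y /inK_rep [r [Er cr ->]] /inK_rep [s [Es cs' ->]].
  rewrite cs_mul //; apply: (inK_cs cl2); [exact: Erep_mul Er Es | move=> n i; exact: (compat_mul cl2 Er Es cr cs' i)].
- move=> x /inK_rep [r [Er cr ->]].
  rewrite cs_inv //; apply: (inK_cs cl2); [exact: Erep_inv Er | move=> n i; exact: (compat_inv cl2 Er cr i)].
- by rewrite cs_one; apply: (inL_K cl2); apply: inL_cs; apply: Zrep_one.
- move=> x y z /inK_rep [r [Er _ ->]] /inK_rep [s [Es _ ->]] /inK_rep [u [Eu _ ->]].
  rewrite (cs_mul Es Eu) (cs_mul Er Es) (cs_mul Er (Erep_mul Es Eu)) (cs_mul (Erep_mul Er Es) Eu).
  by apply: csE => n; apply: tmulA.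
- move=> x /inK_rep [r [Er _ ->]]; rewrite cs_one (cs_mul Erep_one Er).
  by apply: csE => n; apply: tmul1x.
- move=> x /inK_rep [r [Er _ ->]]; rewrite cs_one (cs_mul Er Erep_one).
  by apply: csE => n; apply: tmulx1.
- move=> x /inK_rep [r [Er _ ->]]; rewrite cs_one (cs_inv Er) (cs_mul Er (Erep_inv Er)).
  by apply: csE => n; apply: tmulV.
- move=> x /inK_rep [r [Er _ ->]]; rewrite cs_one (cs_inv Er) (cs_mul (Erep_inv Er) Er).
  by apply: csE => n; apply: tmulVx.
- by move=> x [hL _]; apply: (inL_K cl2).
- rewrite cs_one; apply/inD_cs; first exact: Zrep_one.
  move=> h; have [n hn] := uf_ne hU h; apply: hn; exact: (qNe (@qh1 gT E p n)).
- move=> x y /inD_rep [z [hz -> dz]] /inD_rep [w [hw -> dw]].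
  rewrite (cs_mul (Zrep_E hz) (Zrep_E hw)); apply/inD_cs; first exact: Zrep_mul.
  move=> h; have : U (fun n => ~ inF_n E (z n) \/ ~ inF_n E (w n)).
    apply: (uf_up hU h) => n hn; apply: NNPP => hc; apply: hn.
    apply: (qNmul (@qh1 gT E p n)); apply: NNPP => hh; apply: hc; tauto.
  by case/(uf_union hU).
- move=> x /inD_rep [z [hz -> dz]].
  rewrite (cs_inv (Zrep_E hz)); apply/inD_cs; first exact: Zrep_inv.
  move=> h; apply: dz; apply: (uf_up hU h) => n hn hz'; apply: hn.
  exact: (qNinv (@qh1 gT E p n)).
- move=> f x /inD_rep [z [hz -> dz]] /inK_rep [r [Er _ ->]].
  rewrite (cs_mul (Zrep_E hz) Er) (cs_mul Er (Zrep_E hz)).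
  by apply: csE => n; apply: (hz n).2.
Qed.

Lemma HmulD (x y : sT) : inK E x -> inK E y ->
  Hmul (cosD E U x) (cosD E U y) = cosD E U (xmul x y).
Proof. exact: (qcosM qh2). Qed.

Lemma HinvD (x : sT) : inK E x -> Hinv (cosD E U x) = cosD E U (xinv x).
Proof. exact: (qcosV qh2). Qed.

Lemma cosD_eq (x y : sT) : inK E x -> inK E y ->
  (cosD E U x = cosD E U y <-> inD E U (xmul (xinv x) y)).
Proof. exact: (qcos_eq qh2). Qed.

Lemma cosD_eq1 (x : sT) : inK E x -> (cosD E U x = Hone E U <-> inD E U x).
Proof. exact: (qcos_eq1 qh2). Qed.

Lemma cosD_mem (x : sT) : inK E x -> cosD E U x x.
Proof. exact: (qcos_mem qh2). Qed.

End L2.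

Import GroupScope.

Lemma prod_single (hT : finGroupType) (I : finType) (P : pred I) (a : I) (y : hT) :
  \prod_(i | P i) (if i == a then y else 1) = if P a then y else 1.
Proof.
rewrite big_mkcond (eq_bigr (fun i => if i == a then (if P a then y else 1) else 1)).
  by rewrite -big_mkcond big_pred1_eq.
by move=> i _; case: eqP => [->|_]; case: ifP.
Qed.

Section Iso.
Variables (gT : finGroupType) (E : {group gT}) (p : nat) (U : pset (pset nat)).
Hypothesis cl2 : nil_class E <= 2.
Hypothesis hU : is_ultrafilter U.
Hypothesis pp : prime p.
Local Notation tup := (tup gT p).
Local Notation one n := (@tone gT p n).
Local Notation sT := (seqT gT p).

Lemma ordp n : 0 < p ^ n.
Proof. by rewrite expn_gt0 prime_gt0. Qed.

Definition prodt n (t : tup n) : gT := \prod_(i < p ^ n) t i.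
Definition valn n (k : pset (tup n)) : gT := prodt (epsilon (inhabits (one n)) k).
Definition ulim (g : nat -> gT) : gT := epsilon (inhabits 1) (fun v => U (fun n => g n = v)).
Definition fZ (C : pset sT) : gT :=
  ulim (fun n => valn (epsilon (inhabits (@xone gT E p)) C n)).

Lemma ulim_spec g : U (fun n => g n = ulim g).
Proof. by rewrite /ulim; apply: (epsilon_spec (inhabits 1) (fun v => U (fun n => g n = v))); exact: (@uf_finite U hU gT g). Qed.

Lemma ulim_unique g v : U (fun n => g n = v) -> ulim g = v.
Proof.
move=> h; have [n [h1 h2]] := uf_ne hU (uf_cap hU (ulim_spec g) h).
by rewrite -h1 h2.
Qed.

Lemma prodt_mul n (z w : tup n) : inZ_n E z -> inZ_n E w ->
  prodt (tmul z w) = prodt z * prodt w.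
Proof. by move=> /inZ_nP hz /inZ_nP hw; rewrite /prodt (prod_tmul hz hw). Qed.

Lemma prodt_inv n (z : tup n) : inZ_n E z -> prodt (tinv z) = (prodt z)^-1.
Proof. by move=> /inZ_nP hz; rewrite /prodt (prod_tinv hz). Qed.

Lemma prodt_Z n (t : tup n) : inZ_n E t -> prodt t \in 'Z(E).
Proof. by move=> /inZ_nP h; apply: group_prod => i _. Qed.

Lemma prodt_cos n (z w : tup n) : inZ_n E z -> cosF E z w -> prodt w = prodt z.
Proof.
move=> hz [f [hf ->]]; have hf' := hf; move/inF_nP: hf' => [hfz hfp].
by rewrite prodt_mul //; [rewrite /prodt hfp mulg1 | case: hf].
Qed.

Lemma valn_cos n (z : tup n) : inZ_n E z -> valn (cosF E z) = prodt z.
Proof.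
move=> hz; rewrite /valn; apply: (prodt_cos hz); apply: (epsilon_spec (inhabits (one n)) (cosF E z)).
by exists z; exact: (cosF_mem (inZ_E hz)).
Qed.

Lemma fZ_cs z : Zrep E z -> U (fun n => prodt (z n) = fZ (cosD E U (cs E z))).
Proof.
move=> hz.
have hK : inK E (cs E z) := inL_K cl2 (inL_cs hz).
set y := epsilon (inhabits (@xone gT E p)) (cosD E U (cs E z)).
have hy : cosD E U (cs E z) y.
  by apply: (epsilon_spec (inhabits (@xone gT E p)) (cosD E U (cs E z))); exists (cs E z); exact: cosD_mem.
case: hy => d [/inD_rep [w [hw -> dw]] ye].
have ye' : y = cs E (rmul z w) by rewrite ye cs_mul //; apply: Zrep_E.
have hF : U (fun n => inF_n E (w n)).
  by case: (uf_compl hU (fun n => inF_n E (w n))).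
have hs := ulim_spec (fun n => valn (y n)).
apply: (uf_up hU (uf_cap hU hF hs)) => n [hFn e].
rewrite /fZ -/y -e ye' /cs valn_cos; last by apply: inZ_mul.
rewrite /rmul prodt_mul //; move/inF_nP: hFn => [_ hp]; by rewrite /prodt hp mulg1.
Qed.

Lemma fZ_eq z v : Zrep E z -> U (fun n => prodt (z n) = v) -> fZ (cosD E U (cs E z)) = v.
Proof.
move=> hz h; have [n [h1 h2]] := uf_ne hU (uf_cap hU (fZ_cs hz) h).
by rewrite -h1 h2.
Qed.

Definition single n (b : gT) : tup n :=
  [ffun i => if i == Ordinal (ordp n) then b else 1].

Lemma iso : isomorphic_to_fin (Zcar E U) (@Hmul gT p) 'Z(E).
Proof.
exists fZ; split.
- move=> C [x [hx ->]]; have [z [hz ->]] := inL_rep hx.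
  have [n e] := uf_ne hU (fZ_cs hz); rewrite -e; exact: prodt_Z.
- move=> C1 C2 [x [hx ->]] [y [hy ->]] e.
  have [z [hz ex]] := inL_rep hx; have [w [hw ey]] := inL_rep hy.
  rewrite ex ey in e *.
  have K1 := inL_K cl2 (inL_cs hz); have K2 := inL_K cl2 (inL_cs hw).
  apply/(cosD_eq cl2 hU K1 K2).
  rewrite (cs_inv (Zrep_E hz)) (cs_mul (Zrep_E (Zrep_inv hz)) (Zrep_E hw)).
  apply/inD_cs; first by apply: Zrep_mul; [apply: Zrep_inv|].
  move=> h; have := uf_cap hU h (uf_cap hU (fZ_cs hz) (fZ_cs hw)).
  case/(uf_ne hU) => n [hn [e1 e2]]; apply: hn.
  apply/inF_nP; split; first by apply/inZ_nP; apply: inZ_mul; [apply: inZ_inv|].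
  have := prodt_mul (inZ_inv (hz n)) (hw n); rewrite /prodt => ->.
  have := prodt_inv (hz n); rewrite /prodt => ->.
  by rewrite -/(prodt (z n)) -/(prodt (w n)) e1 e2 e mulVg.
- move=> b hb.
  pose z n := single n b.
  have hz : Zrep E z.
    move=> n; apply/inZ_nP => i; rewrite ffunE; case: eqP => _ //; exact: group1.
  exists (cosD E U (cs E z)); split; first by exists (cs E z); split=> //; apply: inL_cs.
  apply: fZ_eq => //; apply: (uf_up hU (uf_T hU)) => n _.
  by rewrite /prodt /z /single (eq_bigr (fun i => if i == Ordinal (ordp n) then b else 1)) ?prod_single // => i _; rewrite ffunE.
- move=> C1 C2 [x [hx ->]] [y [hy ->]].
  have [z [hz ex]] := inL_rep hx; have [w [hw ey]] := inL_rep hy.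
  rewrite ex ey.
  have K1 := inL_K cl2 (inL_cs hz); have K2 := inL_K cl2 (inL_cs hw).
  rewrite (HmulD cl2 hU K1 K2) (cs_mul (Zrep_E hz) (Zrep_E hw)).
  apply: fZ_eq; first exact: Zrep_mul.
  apply: (uf_up hU (uf_cap hU (fZ_cs hz) (fZ_cs hw))) => n [e1 e2].
  by rewrite /rmul prodt_mul // e1 e2.
Qed.

End Iso.

Import GroupScope.

Section Center.
Variables (gT : finGroupType) (E : {group gT}) (p : nat) (U : pset (pset nat)).
Hypothesis cl2 : nil_class E <= 2.
Hypothesis hU : is_ultrafilter U.
Hypothesis hnp : nonprincipal U.
Hypothesis pp : prime p.
Local Notation tup := (tup gT p).
Local Notation sT := (seqT gT p).
Local Notation cZ := (coset 'Z(E)).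

Lemma commZ a b : a \in E -> b \in E -> (a * b)^-1 * (b * a) \in 'Z(E).
Proof.
move=> ha hb.
have -> : (a * b)^-1 * (b * a) = [~ b, a] by rewrite /commg /conjg invMg !mulgA.
have sub : E^`(1) \subset 'Z(E) by rewrite -nil_class2.
by apply: (subsetP sub); rewrite derg1; apply: mem_commg.
Qed.

Section NC.
Variables (r : forall n, tup n) (Er : Erep E r) (cr : compat_r E r) (n0 : nat).
Hypothesis nz : ~ inZ_n E (r n0).

Definition j0 : nat :=
  if [pick i : 'I_(p ^ n0) | r n0 i \notin 'Z(E)] is Some i then val i else 0.
Definition step m (i : nat) : nat :=
  if [pick q : 'I_(p ^ m.+1) | (q %% p ^ m == i) && (r m.+1 q \notin 'Z(E))] is Some q
  then val q else 0.
Fixpoint J m := match m with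
  | 0 => j0 %% p ^ 0
  | m'.+1 => if m'.+1 <= n0 then j0 %% p ^ m'.+1 else step m' (J m') end.

Lemma J_le m : m <= n0 -> J m = j0 %% p ^ m.
Proof. by case: m => [|m] //= ->. Qed.

Lemma J_gt m : n0 <= m -> J m.+1 = step m (J m).
Proof. by move=> h /=; rewrite leqNgt ltnS h. Qed.

Lemma j0_spec : j0 < p ^ n0 /\ forall i : 'I_(p ^ n0), val i = j0 -> r n0 i \notin 'Z(E).
Proof.
have [i0 hi0] : exists i, r n0 i \notin 'Z(E).
  apply: NNPP => hn; apply: nz; apply/inZ_nP => i; apply: negbNE; apply/negP => h.
  by apply: hn; exists i.
rewrite /j0; case: pickP => [i hi | /(_ i0)]; last by rewrite hi0.
by split=> [|i' e]; [apply: ltn_ord | rewrite (val_inj e)].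
Qed.

Lemma step_spec m (i : 'I_(p ^ m)) : r m i \notin 'Z(E) ->
  [/\ step m i < p ^ m.+1, step m i %% p ^ m = i &
      forall q : 'I_(p ^ m.+1), val q = step m i -> r m.+1 q \notin 'Z(E)].
Proof.
move=> hi; rewrite /step; case: pickP => [q /andP[h1 h2] | hn].
  by split=> [|//|q' e]; [apply: ltn_ord | apply/eqP | rewrite (val_inj e)].
exfalso; move/negP: hi; apply.
apply: coset_idr; first by apply: EnZ; apply: Er.
rewrite (@cr m i) cZ_psi //; apply: big1 => q hq; apply: coset_id.
by have := hn q; rewrite hq /= => /negbT; rewrite negbK.
Qed.

Lemma Jspec m : n0 <= m -> J m < p ^ m /\
  forall i : 'I_(p ^ m), val i = J m -> r m i \notin 'Z(E).
Proof.
move=> hm; rewrite -(subnKC hm); elim: (m - n0) => [|k IH].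
  rewrite addn0 J_le // modn_small; first exact: j0_spec.
  by case: j0_spec.
rewrite addnS; have [hl hs] := IH; rewrite J_gt ?leq_addr //.
have [s1 s2 s3] := step_spec (hs (Ordinal hl) erefl).
by split.
Qed.

Lemma Jlt m : J m < p ^ m.
Proof.
case: (leqP m n0) => h; first by rewrite J_le // ltn_pmod // expn_gt0 prime_gt0.
by case: (Jspec (ltnW h)).
Qed.

Lemma Jmod m : J m.+1 %% p ^ m = J m.
Proof.
case: (leqP m.+1 n0) => h.
  by rewrite !J_le ?(ltnW h) // modn_dvdm // (dvdn_exp2l _ (leqnSn m)).
rewrite J_gt //; have [hl hs] := Jspec h.
by case: (step_spec (hs (Ordinal hl) erefl)).
Qed.

Definition Jo m : 'I_(p ^ m) := Ordinal (Jlt m).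
Definition am m : gT := r m (Jo m).

Lemma am_nc m : n0 <= m -> am m \notin 'Z(E).
Proof. by move=> h; have [_ hs] := Jspec h; apply: hs. Qed.

Section G.
Variables (y : gT) (yE : y \in E).
Definition gs m : tup m := [ffun i => if i == Jo m then y else 1].

Lemma Egs : Erep E gs.
Proof. by move=> m i; rewrite ffunE; case: eqP => _ //; exact: group1. Qed.

Lemma psi_gs m : psi_rep (gs m.+1) = gs m.
Proof.
apply/ffunP => i; rewrite ffunE.
rewrite (eq_bigr (fun q => if q == Jo m.+1 then y else 1)); last by move=> q _; rewrite ffunE.
rewrite prod_single ffunE /= Jmod.
have -> : (i == Jo m) = (J m == i) by rewrite eq_sym.
by [].
Qed.

Lemma cgs : compat_r E gs.
Proof. by move=> m i; rewrite psi_gs. Qed.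

End G.

Lemma nc_witness : exists s, [/\ Erep E s, compat_r E s &
  U (fun m => ~ inF_n E (tmul (tinv (tmul (r m) (s m))) (tmul (s m) (r m))))].
Proof.
have [c hc] := uf_finite hU (fun m => cZ (am m)).
have [m1 [hm1 hn1]] := uf_ne hU (uf_cap hU hc (uf_cofinite hU hnp n0)).
have ncm1 := am_nc hn1.
have aE : am m1 \in E by apply: Er.
have [y [yE ny]] : exists y, y \in E /\ ~ commute (am m1) y.
  apply: NNPP => hn; move/negP: ncm1; apply; apply/centerP; split=> // z zE.
  by apply: NNPP => hc'; apply: hn; exists z.
exists (gs y); split; [exact: Egs yE | exact: cgs |].
apply: (uf_up hU (uf_cap hU hc (uf_cofinite hU hnp n0))) => m [hm hnm] hF.
have amE : am m \in E by apply: Er.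
have hz : (am m1)^-1 * am m \in 'Z(E) by apply/eqZ_coset => //; rewrite hm hm1.
move/inF_nP: hF => [_ hp].
have e : forall i, i != Jo m ->
    (tmul (tinv (tmul (r m) (gs y m))) (tmul (gs y m) (r m))) i = 1.
  by move=> i /negbTE hi; rewrite !ffunE hi mulg1 mul1g mulVg.
rewrite (eq_bigr (fun i => if i == Jo m then
   (tmul (tinv (tmul (r m) (gs y m))) (tmul (gs y m) (r m))) (Jo m) else 1)) in hp; last first.
  by move=> i _; case: eqP => [->|/eqP]; [|apply: e].
rewrite prod_single /= !ffunE eqxx in hp.
apply: ny.
have cm : commute (am m) y.
  by apply/eqP; rewrite eq_mulVg1; apply/eqP.
set z := (am m1)^-1 * am m in hz.
have ez : am m = am m1 * z by rewrite /z mulKVg.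
have czy : commute z y by have /centerP [_ h] := hz; apply: h.
move: cm; rewrite /commute ez => cm.
apply: (mulIg z); rewrite -mulgA -czy mulgA cm -!mulgA.
by [].
Qed.

End NC.

Lemma H_center_sub (C : pset sT) : Hcar E U C -> (forall g, Hcar E U g -> Hmul C g = Hmul g C) ->
  Zcar E U C.
Proof.
move=> [x [hx ->]] hcomm; have [r [Er cr ex]] := inK_rep hx; subst x.
case: (classic (forall n, inZ_n E (r n))) => [hz | /not_all_ex_not [n0 nz]].
  by exists (cs E r); split=> //; apply: inL_cs.
exfalso.
have [s [Es cs' hU']] := nc_witness Er cr nz.
have hKs : inK E (cs E s) := inK_cs cl2 Es cs'.
have := hcomm (cosD E U (cs E s)) (ex_intro _ (cs E s) (conj hKs erefl)).
rewrite (HmulD cl2 hU hx hKs) (HmulD cl2 hU hKs hx) (cs_mul Er Es) (cs_mul Es Er).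
have hK1 : inK E (cs E (rmul r s)) by rewrite -(cs_mul Er Es); exact: (qGmul (@qh2 gT E p U cl2 hU) hx hKs).
have hK2 : inK E (cs E (rmul s r)) by rewrite -(cs_mul Es Er); exact: (qGmul (@qh2 gT E p U cl2 hU) hKs hx).
move/(cosD_eq cl2 hU hK1 hK2).
rewrite (cs_inv (Erep_mul Er Es)) (cs_mul (Erep_inv (Erep_mul Er Es)) (Erep_mul Es Er)).
move/inD_cs; apply.
  move=> n; apply/inZ_nP => i; rewrite !ffunE; apply: commZ; [apply: Er | apply: Es].
exact: hU'.
Qed.

End Center.

Import GroupScope.

Section Final.
Variables (gT : finGroupType) (E : {group gT}) (p : nat) (U : pset (pset nat)).
Hypothesis cl2 : nil_class E <= 2.
Hypothesis hU : is_ultrafilter U.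
Local Notation tup := (tup gT p).
Local Notation sT := (seqT gT p).

Lemma Zcar_H (C : pset sT) : Zcar E U C -> Hcar E U C.
Proof. by case=> x [hx ->]; exists x; split=> //; apply: inL_K. Qed.

Lemma Zcar_rep (C : pset sT) : Zcar E U C -> exists z, Zrep E z /\ C = cosD E U (cs E z).
Proof. by case=> x [hx ->]; have [z [hz ->]] := inL_rep hx; exists z. Qed.

Lemma Hcar_rep (C : pset sT) : Hcar E U C ->
  exists r, [/\ Erep E r, compat_r E r & C = cosD E U (cs E r)].
Proof. by case=> x [hx ->]; have [r [hr cr ->]] := inK_rep hx; exists r. Qed.

Lemma HmulD_cs (r s : forall n, tup n) : Erep E r -> compat_r E r -> Erep E s -> compat_r E s ->
  Hmul (cosD E U (cs E r)) (cosD E U (cs E s)) = cosD E U (cs E (rmul r s)).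
Proof.
move=> Er cr Es cs'.
by rewrite (HmulD cl2 hU (inK_cs cl2 Er cr) (inK_cs cl2 Es cs')) (cs_mul Er Es).
Qed.

Lemma HinvD_cs (r : forall n, tup n) : Erep E r -> compat_r E r ->
  Hinv (cosD E U (cs E r)) = cosD E U (cs E (rinv r)).
Proof. by move=> Er cr; rewrite (HinvD cl2 hU (inK_cs cl2 Er cr)) (cs_inv Er). Qed.

Lemma Zcar_central (C g : pset sT) : Zcar E U C -> Hcar E U g -> Hmul C g = Hmul g C.
Proof.
move=> /Zcar_rep [z [hz ->]] /Hcar_rep [s [Es cs' ->]].
have Ez := Zrep_E hz; have cz := compat_Z hz.
rewrite !HmulD_cs //; congr (cosD E U _); apply: csE => n.
exact: (hz n).2.
Qed.

Lemma Hone_Z : Zcar E U (@Hone gT E p U).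
Proof. exists (@xone gT E p); split=> //; rewrite cs_one; apply: inL_cs; exact: (@Zrep_one gT E p). Qed.

Lemma Hone_cs : @Hone gT E p U = cosD E U (cs E (@rone gT p)).
Proof. by []. Qed.

Lemma Zcar_mul (a b : pset sT) : Zcar E U a -> Zcar E U b -> Zcar E U (Hmul a b).
Proof.
move=> /Zcar_rep [z [hz ->]] /Zcar_rep [w [hw ->]].
rewrite (HmulD_cs (Zrep_E hz) (compat_Z hz) (Zrep_E hw) (compat_Z hw)).
by exists (cs E (rmul z w)); split=> //; apply: inL_cs; apply: Zrep_mul.
Qed.

Lemma HmulHone : Hmul (@Hone gT E p U) (@Hone gT E p U) = @Hone gT E p U.
Proof.
rewrite Hone_cs (HmulD_cs (@Erep_one gT E p) (compat_Z (@Zrep_one gT E p)) (@Erep_one gT E p) (compat_Z (@Zrep_one gT E p))).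
by congr (cosD E U _); apply: csE => n; apply: tmul1x.
Qed.

Lemma comm_elt (x g : pset sT) : Hcar E U x -> Hcar E U g -> Hmul x g <> Hmul g x ->
  let c := Hmul (Hinv x) (Hmul (Hmul (Hinv g) x) g) in
  Zcar E U c /\ c <> Hone E U.
Proof.
move=> /Hcar_rep [r [Er cr ->]] /Hcar_rep [s [Es cs' ->]] hne c.
have Eri := Erep_inv Er; have cri := compat_inv cl2 Er cr.
have Esi := Erep_inv Es; have csi := compat_inv cl2 Es cs'.
have E1 := Erep_mul Esi Er; have c1 := compat_mul cl2 Esi Er csi cr.
have E2 := Erep_mul E1 Es; have c2 := compat_mul cl2 E1 Es c1 cs'.
rewrite /c !HinvD_cs // HmulD_cs // HmulD_cs // HmulD_cs //.
set w := rmul (rinv r) (rmul (rmul (rinv s) r) s).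
have ew : forall n, w n = tmul (tinv (tmul (s n) (r n))) (tmul (r n) (s n)).
  by move=> n; apply/ffunP => i; rewrite !ffunE invMg !mulgA.
have hw : Zrep E w.
  by move=> n; rewrite ew; apply/inZ_nP => i; rewrite !ffunE; apply: (commZ cl2); [apply: Es|apply: Er].
split; first by exists (cs E w); split=> //; apply: inL_cs.
move=> e; apply: hne.
rewrite !HmulD_cs //.
have hKw : inK E (cs E w) := inL_K cl2 (inL_cs hw).
move: e; rewrite Hone_cs -cs_one.
move/(cosD_eq1 cl2 hU hKw)/(qNinv (@qh2 gT E p U cl2 hU)) => hd.
have hK1 : inK E (cs E (rmul r s)) := inK_cs cl2 (Erep_mul Er Es) (compat_mul cl2 Er Es cr cs').
have hK2 : inK E (cs E (rmul s r)) := inK_cs cl2 (Erep_mul Es Er) (compat_mul cl2 Es Er cs' cr).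
apply/(cosD_eq cl2 hU hK1 hK2).
rewrite (cs_inv (Erep_mul Er Es)) (cs_mul (Erep_inv (Erep_mul Er Es)) (Erep_mul Es Er)).
rewrite (cs_inv (Zrep_E hw)) in hd.
suff -> : rmul (rinv (rmul r s)) (rmul s r) = rinv w by [].
apply: functional_extensionality_dep => n; apply/ffunP => i.
by rewrite /w !ffunE !invMg !invgK !mulgA.
Qed.

End Final.

Lemma cyc_sub (gT : finGroupType) (G : {group gT}) (p : nat) (w z0 : gT) :
  cyclic G -> p.-group G -> prime p -> w \in G -> w != 1 -> z0 \in G -> #[z0] = p ->
  z0 \in <[w]>.
Proof.
move=> cG pG pp wG wn1 zG oz.
have sW : <[w]> \subset G by rewrite cycle_subG.
have pW : p.-group <[w]> := pgroupS sW pG.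
have ntW : <[w]> != 1 :> {set gT} by rewrite cycle_eq1.
have [_ pd _] := pgroup_pdiv pW ntW.
have [u uW ou] := Cauchy pp pd.
have s1 : <[u]> \subset G by rewrite cycle_subG (subsetP sW).
have s2 : <[z0]> \subset G by rewrite cycle_subG.
have e : <[u]>%G == <[z0]>%G :> {set gT}.
  by rewrite (eq_subG_cyclic cG s1 s2) -[#|<[u]>|]/#[u] -[#|<[z0]>|]/#[z0] ou oz.
have hz : z0 \in <[u]> by rewrite (eqP e) cycle_id.
by apply: (subsetP _ _ hz); rewrite cycle_subG.
Qed.

End Aux.
Import Aux.
Unset Implicit Arguments.


Theorem theorem4p4 (gT : finGroupType) (E : {group gT}) (p : nat)
  (U : pset (pset nat)) :
  prime p -> (p.-group E)%g -> ~~ abelian E -> nil_class E = 2 ->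
  cyclic ('Z(E))%g ->
  is_ultrafilter U -> nonprincipal U ->
  [/\ isomorphic_to_fin (@Zcar gT E p U) (@Hmul gT p) ('Z(E))%g,
      monolithic (@Hcar gT E p U) (@Hmul gT p) (@Hinv gT p) (@Hone gT E p U) &
      gcenter (@Hcar gT E p U) (@Hmul gT p) = @Zcar gT E p U].
Proof.
move=> pp pE nab ncl cycZ hU hnp.
have cl2 : nil_class E <= 2 by rewrite ncl.
have hiso := @iso gT E p U cl2 hU pp.
have hcen : gcenter (@Hcar gT E p U) (@Hmul gT p) = @Zcar gT E p U.
  apply: pset_ext => C; split.
  - case=> hC hc; exact: (H_center_sub cl2 hU hnp pp hC hc).
  - move=> hZ; split; first exact: (Zcar_H cl2 hZ).
    by move=> g hg; apply: (Zcar_central cl2 hU hZ hg).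
split=> //.
case: hiso => f [fZ finj fsurj fhom].
have ntE : (E :!=: 1)%g.
  by apply/negP => /eqP e; move/negP: nab; apply; rewrite e abelian1.
have ntZ : ('Z(E) != 1)%g by rewrite (center_nil_eq1 (pgroup_nil pE)).
have pZ : (p.-group 'Z(E))%g := pgroupS (center_sub E) pE.
have [_ pdZ _] := pgroup_pdiv pZ ntZ.
have [z0 z0Z oz0] := Cauchy pp pdZ.
have [h0 [h0Z fh0]] := fsurj z0 z0Z.
have hone := @Hone_Z gT E p U.
have f1 : f (@Hone gT E p U) = 1%g.
  have := fhom _ _ hone hone; rewrite (@HmulHone gT E p U cl2 hU) => e.
  by apply: (mulIg (f (Hone E U))); rewrite mul1g -e.
exists h0; split.
- exact: (Zcar_H cl2 h0Z).
- move=> e; have : z0 = 1%g by rewrite -fh0 e f1.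
  move/eqP; rewrite -order_eq1 oz0 => /eqP e1.
  by rewrite e1 in pp.
move=> N [[NH N1 Nmul Ninv] Nnorm] [x [Nx xne]].
have [c [Nc Zc cne]] : exists c, [/\ N c, Zcar E U c & c <> Hone E U].
  case: (classic (Zcar E U x)) => hxZ; first by exists x.
  have hxH := NH x Nx.
  have [g [gH gne]] : exists g, Hcar E U g /\ Hmul x g <> Hmul g x.
    apply: NNPP => hn; apply: hxZ; apply: (H_center_sub cl2 hU hnp pp) => // g gH.
    by apply: NNPP => ne; apply: hn; exists g.
  have [hc1 hc2] := comm_elt cl2 hU hxH gH gne.
  exists (Hmul (Hinv x) (Hmul (Hmul (Hinv g) x) g)); split=> //.
  by apply: Nmul; [apply: Ninv | apply: Nnorm].
have fcZ := fZ c Zc.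
have fcn : (f c != 1)%g.
  by apply/eqP => e; apply: cne; apply: finj => //; rewrite e f1.
have [k ek] := cycleP _ _ (cyc_sub cycZ pZ pp fcZ fcn z0Z oz0).
pose Hpow k := iter k (Hmul c) (Hone E U).
have hp : forall k, [/\ N (Hpow k), Zcar E U (Hpow k) & f (Hpow k) = (f c ^+ k)%g].
  elim=> [|j [IH1 IH2 IH3]]; first by split=> //; rewrite f1 expg0.
  split; [exact: Nmul | exact: (Zcar_mul cl2 hU Zc IH2) | by rewrite /= fhom // IH3 expgS].
have [h1 h2 h3] := hp k.
have <- : Hpow k = h0 by apply: finj => //; rewrite h3 fh0 ek.
exact: h1.
Qed.
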